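(* Let $t$ be a positive integer. Fix complex numbers $\alpha,\beta$ with $\alpha^4=1+i\sqrt t$ and $\beta^4=-1+i\sqrt t$, and put $\gamma=\alpha\beta$ (so $\gamma^4=-t-1$). For integers $x,y$ let $\xi(x,y)=\sqrt2\,\alpha\,(x-i\sqrt t\,y)$ and $\eta(x,y)=\sqrt2\,\beta\,(x+i\sqrt t\,y)$. If $(x_1,y_1)$ and $(x_2,y_2)$ are two pairs of rational integers, then $$\frac{\xi(x_1,y_1)\,\eta(x_2,y_2)}{\gamma},\qquad \xi(x_1,y_1)^3\,\xi(x_2,y_2),\qquad \eta(x_1,y_1)^3\,\eta(x_2,y_2)$$ are algebraic integers lying in $\mathbb{Q}(\sqrt{-t})$.
   Context: $\sqrt{-t}=i\sqrt t$. The quantity $\gamma$ plays the role of the fourth root $(-t-1)^{1/4}$ chosen compatibly with $\alpha,\beta$. *)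

(* Defs.v *)
From HB Require Import structures.
From mathcomp Require Import all_boot all_order all_algebra all_field.
Set Implicit Arguments. Unset Strict Implicit. Unset Printing Implicit Defensive.
Import Order.TTheory GRing.Theory Num.Theory.
Local Open Scope ring_scope.

(* Complex numbers are modelled by algC (algebraic complex numbers); all the
   quantities in the statement are algebraic. sqrt t := sqrtC t (nonnegative
   root), and sqrt(-t) := 'i * sqrtC t as fixed in the paper. *)

Definition sqrt_negt (t : nat) : algC := 'i * sqrtC (t%:R).

Definition xif (t : nat) (alpha : algC) (x y : int) : algC :=
  sqrtC 2 * alpha * (x%:~R - sqrt_negt t * y%:~R).

Definition etaf (t : nat) (beta : algC) (x y : int) : algC :=
  sqrtC 2 * beta * (x%:~R + sqrt_negt t * y%:~R).

Definition in_Q_sqrt_negt (t : nat) (z : algC) : Prop :=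
  exists a b : rat, z = ratr a + ratr b * sqrt_negt t.

(* Main.v *)
Require Import Defs.
From HB Require Import structures.
From mathcomp Require Import all_boot all_order all_algebra all_field.
From mathcomp Require Import ring.
Import Order.TTheory GRing.Theory Num.Theory.
Local Open Scope ring_scope.

Section Aux.
Variable t : nat.
Let u := sqrt_negt t.

Lemma u2 : u ^+ 2 = - (t%:R).
Proof. by rewrite /u /sqrt_negt exprMn sqrCi sqrtCK mulN1r. Qed.

Definition P (z : algC) := exists a b : rat, z = ratr a + ratr b * u.

Lemma Pint (x : int) : P x%:~R.
Proof. by exists x%:~R, 0; rewrite rmorph0 mul0r addr0 rmorph_int. Qed.

Lemma Pnat (n : nat) : P n%:R.
Proof. by have := Pint n. Qed.

Lemma Pu : P u.
Proof. by exists 0, 1; rewrite rmorph0 rmorph1 add0r mul1r. Qed.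

Lemma PD x y : P x -> P y -> P (x + y).
Proof.
move=> [a [b ->]] [c [d ->]]; exists (a + c), (b + d).
by rewrite !rmorphD /=; ring.
Qed.

Lemma PN x : P x -> P (- x).
Proof. by move=> [a [b ->]]; exists (- a), (- b); rewrite !rmorphN /=; ring. Qed.

Lemma PM x y : P x -> P y -> P (x * y).
Proof.
move=> [a [b ->]] [c [d ->]]; exists (a * c - t%:R * b * d), (a * d + b * c).
rewrite !(rmorphD, rmorphN, rmorphM) /= ratr_nat.
have hT : (t%:R : algC) = - u ^+ 2 by rewrite u2 opprK.
rewrite hT; ring.
Qed.

Lemma PX x n : P x -> P (x ^+ n).
Proof.
move=> Px; elim: n => [|n IH]; first by rewrite expr0; exact: (Pnat 1).
by rewrite exprS; apply: PM.
Qed.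

Lemma Aint_u : u \in Aint.
Proof.
apply: (@root_monic_Aint ('X^2 + (t%:R)%:P)).
- by rewrite /root hornerD hornerXn hornerC u2 addNr.
- by rewrite monicXnaddC.
- apply/polyOverP => i; rewrite coefD coefXn coefC.
  case: (i == 2)%N; case: (i == 0)%N => /=.
  all: by rewrite -?natrD ?add0r ?addr0 ?natr_int ?int_num0.
Qed.

End Aux.
Arguments PD {t x y}. Arguments PN {t x}. Arguments PM {t x y}. Arguments PX {t x n}.

Theorem lemma3p3 (t : nat) (ht : (0 < t)%N) (alpha beta : algC)
  (halpha : alpha ^+ 4 = 1 + 'i * sqrtC (t%:R))
  (hbeta : beta ^+ 4 = -1 + 'i * sqrtC (t%:R))
  (x1 y1 x2 y2 : int) :
  let gamma := alpha * beta in
  let z1 := xif t alpha x1 y1 * etaf t beta x2 y2 / gamma in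
  let z2 := xif t alpha x1 y1 ^+ 3 * xif t alpha x2 y2 in
  let z3 := etaf t beta x1 y1 ^+ 3 * etaf t beta x2 y2 in
  [/\ z1 \in Aint /\ in_Q_sqrt_negt t z1,
      z2 \in Aint /\ in_Q_sqrt_negt t z2 &
      z3 \in Aint /\ in_Q_sqrt_negt t z3].
Proof.
move=> gamma z1 z2 z3.
set u := sqrt_negt t.
have hu : u ^+ 2 = - t%:R by exact: u2.
have tn0 : (t%:R : algC) != 0 by rewrite pnatr_eq0 -lt0n.
have h2 : sqrtC 2 ^+ 2 = 2 :> algC by exact: sqrtCK.
have ha : alpha ^+ 4 = 1 + u by [].
have hb : beta ^+ 4 = -1 + u by [].
have an0 : alpha != 0.
  apply/eqP => a0; move: ha; rewrite a0 expr0n /= => e.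
  have u1 : u = -1 by rewrite -(addKr 1 u) -e addr0.
  move: hu; rewrite u1 sqrrN expr1n => /eqP.
  by rewrite -addr_eq0 nat1r pnatr_eq0.
have bn0 : beta != 0.
  apply/eqP => a0; move: hb; rewrite a0 expr0n /= => e.
  have u1 : u = 1 by rewrite -(addKr (-1) u) -e addr0 opprK.
  move: hu; rewrite u1 expr1n => /eqP.
  by rewrite -addr_eq0 nat1r pnatr_eq0.
set w1 := x1%:~R - u * y1%:~R; set w2 := x2%:~R - u * y2%:~R.
set v1 := x1%:~R + u * y1%:~R; set v2 := x2%:~R + u * y2%:~R.
have e1 : z1 = 2 * w1 * v2.
  rewrite /z1 /gamma /xif /etaf -/u -/w1 -/v2 -[in RHS]h2.
  by field; rewrite an0 bn0.
have e2 : z2 = 4 * (1 + u) * (w1 ^+ 3 * w2).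
  rewrite /z2 /xif -/u -/w1 -/w2 -ha.
  have -> : (4 : algC) = (sqrtC 2 ^+ 2) ^+ 2 by rewrite h2; ring.
  ring.
have e3 : z3 = 4 * (-1 + u) * (v1 ^+ 3 * v2).
  rewrite /z3 /etaf -/u -/v1 -/v2 -hb.
  have -> : (4 : algC) = (sqrtC 2 ^+ 2) ^+ 2 by rewrite h2; ring.
  ring.
have Au := Aint_u t.
have Aw : forall x y : int, x%:~R - u * y%:~R \in Aint /\ x%:~R + u * y%:~R \in Aint.
  by move=> x y; split; [apply: rpredB|apply: rpredD]; rewrite ?Aint_int //; apply: rpredM; rewrite ?Aint_int.
have Pw : forall x y : int, P t (x%:~R - u * y%:~R) /\ P t (x%:~R + u * y%:~R).
  move=> x y; have Puy : P t (u * y%:~R) := PM (Pu t) (Pint t y).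
  by split; [exact: PD (Pint t x) (PN Puy)|exact: PD (Pint t x) Puy].
have Aw1 : w1 \in Aint := (Aw x1 y1).1. have Av1 : v1 \in Aint := (Aw x1 y1).2.
have Aw2 : w2 \in Aint := (Aw x2 y2).1. have Av2 : v2 \in Aint := (Aw x2 y2).2.
have Pw1 : P t w1 := (Pw x1 y1).1. have Pv1 : P t v1 := (Pw x1 y1).2.
have Pw2 : P t w2 := (Pw x2 y2).1. have Pv2 : P t v2 := (Pw x2 y2).2.
have P4 : P t 4 := Pnat t 4.
have P2 : P t 2 := Pnat t 2.
have P1 : P t 1 := Pnat t 1.
have Pu' : P t u := Pu t.
have Au' : u \in Aint := Au.
clearbody w1 w2 v1 v2 u.
split; [rewrite e1|rewrite e2|rewrite e3]; split.
- rewrite !rpredM ?rpred_nat //; first [ exact: Aw1 | exact: Aw2 | exact: Av1 | exact: Av2 | exact: Au' | exact: rpred1].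
- by apply: PM => //; apply: PM.
- rewrite !rpredM ?rpredD ?rpredX ?rpred_nat //; first [ exact: Aw1 | exact: Aw2 | exact: Av1 | exact: Av2 | exact: Au' | exact: rpred1].
- apply: PM; first by apply: PM => //; apply: PD => //; exact: Pu'.
  by apply: PM => //; apply: PX.
- rewrite !rpredM ?rpredD ?rpredN ?rpredX ?rpred_nat //; first [ exact: Aw1 | exact: Aw2 | exact: Av1 | exact: Av2 | exact: Au' | exact: rpred1].
- apply: PM; first by apply: PM => //; apply: PD; [apply: PN|exact: Pu'].
  by apply: PM => //; apply: PX.
Qed.
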